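(* Let $N=\begin{pmatrix}0&1&0\\0&0&1\\0&0&0\end{pmatrix}$, $\xi=(x,y,z)^T$, $\beta=2zx-y^2$, and $d\ge1$. The space $\ker(\mathrm{ad}_{N^*})\cap V^3_d$ (the orthogonal complement of $\mathrm{rng}\,\mathrm{ad}_N$ in $F^3_d$, intersected with $V^3_d$) consists exactly of the vector fields $$h=\begin{pmatrix}x^2\psi_1\\ xy\,\psi_1+x\psi_2\\ \tfrac12 y^2\psi_1+y\psi_2+\psi_3\end{pmatrix},$$ where $\psi_i=\psi_i(x,\beta)$ are polynomials in the two quantities $x$ and $\beta$ (so that $\psi_1,\psi_2,\psi_3$ are homogeneous in $\xi$ of degrees $d-2,d-1,d$ respectively) and $\psi_3$ satisfies $$-2\,\partial_\beta\psi_3=x\,\partial_x\psi_1+3\psi_1+\beta\,\partial_\beta\psi_1,$$ the partial derivatives being taken with respect to the two arguments $(x,\beta)$. The dimension of this space is $d+1$.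
   Context: $F^3_d$ is the space of vector fields on $\mathbb{R}^3$ with components real homogeneous polynomials of degree $d$, $V^3_d=\{v\in F^3_d:\nabla\cdot v=0\}$. $\mathrm{ad}_A h(\xi)=Dh(\xi)A\xi-Ah(\xi)$, $N^*=N^T$. The inner product on $F^3_d$ is $\langle p,q\rangle=\sum_i p_i(\partial_\xi)q_i(\xi)|_{\xi=0}$; with respect to it the adjoint of $\mathrm{ad}_N$ is $\mathrm{ad}_{N^*}$, so $\ker\mathrm{ad}_{N^*}$ is the orthogonal complement (cokernel) of $\mathrm{rng}\,\mathrm{ad}_N$. *)

(* Defs.v *)
From HB Require Import structures.
From mathcomp Require Import all_boot all_order all_algebra.
From mathcomp Require Import mpoly.
Set Implicit Arguments. Unset Strict Implicit. Unset Printing Implicit Defensive.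
Import Order.TTheory GRing.Theory Num.Theory.
Local Open Scope ring_scope.

Definition ix : 'I_3 := @inord 2 0.
Definition iy : 'I_3 := @inord 2 1.
Definition iz : 'I_3 := @inord 2 2.
(* arguments of the bivariate polynomials psi(x, beta) *)
Definition ax : 'I_2 := @inord 1 0.
Definition abeta : 'I_2 := @inord 1 1.

Definition vfield (R : realFieldType) := 'I_3 -> {mpoly R[3]}.

Definition in_F (R : realFieldType) (d : nat) (h : vfield R) : Prop :=
  forall i, h i \is d.-homog.

Definition divergence (R : realFieldType) (h : vfield R) : {mpoly R[3]} :=
  \sum_(i < 3) (h i)^`M(i).

Definition in_V (R : realFieldType) (d : nat) (h : vfield R) : Prop :=
  in_F d h /\ divergence h = 0.

(* ad_A h (xi) = Dh(xi) A xi - A h(xi) *)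
Definition ad (R : realFieldType) (A : 'M[R]_3) (h : vfield R) : vfield R :=
  fun i => \sum_(j < 3) (h i)^`M(j) * (\sum_(k < 3) (A j k)%:MP * 'X_k)
           - \sum_(j < 3) (A i j)%:MP * h j.

Definition Nmat (R : realFieldType) : 'M[R]_3 :=
  \matrix_(i < 3, j < 3) (if j == i.+1 :> nat then 1 else 0).

Definition beta (R : realFieldType) : {mpoly R[3]} :=
  2%:R * 'X_iz * 'X_ix - 'X_iy ^+ 2.

Definition subst_xb (R : realFieldType) (psi : {mpoly R[2]}) : {mpoly R[3]} :=
  psi \mPo [tuple ('X_ix : {mpoly R[3]}); beta R].

(* homogeneous of (integer) degree k; a negative degree forces p = 0 *)
Definition homog_z (R : realFieldType) (k : int) (p : {mpoly R[3]}) : Prop :=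
  if (k < 0)%R then p = 0 else p \is (`|k|%N).-homog.

Definition h_of (R : realFieldType) (psi1 psi2 psi3 : {mpoly R[2]}) : vfield R :=
  let P1 := subst_xb psi1 in let P2 := subst_xb psi2 in let P3 := subst_xb psi3 in
  fun i =>
    if i == ix then 'X_ix ^+ 2 * P1
    else if i == iy then 'X_ix * 'X_iy * P1 + 'X_ix * P2
    else (2%:R)^-1 *: ('X_iy ^+ 2 * P1) + 'X_iy * P2 + P3.

Definition psi_cond (R : realFieldType) (psi1 psi3 : {mpoly R[2]}) : Prop :=
  - (2%:R *: psi3^`M(abeta)) =
    'X_ax * psi1^`M(ax) + 3%:R *: psi1 + 'X_abeta * psi1^`M(abeta).

Definition in_S (R : realFieldType) (d : nat) (h : vfield R) : Prop :=
  in_V d h /\ ad (Nmat R)^T h = (fun _ => 0).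

(* Main.v *)
Require Import Defs.
From HB Require Import structures.
From mathcomp Require Import all_boot all_order all_algebra.
From mathcomp Require Import mpoly.
From mathcomp Require Import ring zify.
From Stdlib Require Import FunctionalExtensionality.
Import Order.TTheory GRing.Theory Num.Theory.
Set Implicit Arguments. Unset Strict Implicit. Unset Printing Implicit Defensive.
Local Open Scope ring_scope.

Section Crux.
Variable R : realFieldType.
Notation F := (nat -> nat -> nat -> R).
Definition isL (g T : F) :=
 [/\ forall a b c, T a.+1 b.+1 c = g a b.+2 c *+ b.+2 + g a.+1 b c.+1 *+ c.+1,
     forall a c, T a.+1 0%N c = g a 1%N c,
     forall b c, T 0%N b.+1 c = g 0%N b c.+1 *+ c.+1
   & forall c, T 0%N 0%N c = 0].

Lemma mulrn_reg (x : R) n : x *+ n.+1 = 0 -> x = 0.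
Proof. by move/eqP; rewrite mulrn_eq0 /= => /eqP. Qed.

Lemma alg1 (X Y Z : R) n : X = Y *+ n.+3 + Z -> 0 = X *+ n.+2 + Z -> Y = X.
Proof.
move=> e1 e2; apply/eqP; rewrite eq_sym -subr_eq0; apply/eqP; apply: (@mulrn_reg _ n.+2).
have -> : (X - Y) *+ n.+3 = (X - (Y *+ n.+3 + Z)) + (X *+ n.+2 + Z).
  rewrite mulrnBl [X *+ n.+3]mulrS; set A := X *+ n.+2; set B := Y *+ n.+3; ring.
by rewrite -e1 -e2 subrr add0r.
Qed.

Lemma alg2 (T0 W : R) m n : T0 = W *+ m.+1 -> 0 = T0 *+ n.+2 + W *+ m.+1 -> W = 0.
Proof.
move=> e1 e2; rewrite e1 -mulrnA -mulrnDr in e2.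
by apply: (@mulrn_reg _ (m.+1 * n.+2 + m)%N); rewrite e2 addnS.
Qed.

Lemma alg3 (G Q W : R) n a : G = Q *+ n + W *+ a.+2 -> 0 = Q *+ n + G *+ a.+1 -> W = G.
Proof.
move=> e1 e2; apply/eqP; rewrite -subr_eq0; apply/eqP; apply: (@mulrn_reg _ a.+1).
have -> : (W - G) *+ a.+2 = (Q *+ n + W *+ a.+2 - G) - (Q *+ n + G *+ a.+1).
  rewrite mulrnBl [G *+ a.+2]mulrS; set A := G *+ a.+1; set B := W *+ a.+2; ring.
by rewrite -e1 -e2 subrr subr0.
Qed.

Lemma isL_ext g T T' : isL g T -> (forall a b c, T a b c = T' a b c) -> isL g T'.
Proof. by case=> h1 h2 h3 h4 e; split=> *; rewrite -e. Qed.

Lemma Det g T : isL g T -> (forall a b c, T a b c = 0) ->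
  (forall a c, g a 0%N c = 0) -> forall a b c, g a b c = 0.
Proof.
case=> h1 h2 h3 h4 hT h0.
have: forall b a c, g a b c = 0 /\ g a b.+1 c = 0.
  elim=> [|b IH] a c; first by split; rewrite ?h0 // -h2 hT.
  split; first by case: (IH a c).
  apply: (@mulrn_reg _ b.+1); have := h1 a b c; rewrite hT.
  by case: (IH a.+1 c.+1) => -> _; rewrite mul0rn addr0 => <-.
by move=> H a b c; case: (H b a c).
Qed.

Lemma Ulem g T : isL g T -> isL T (fun _ _ _ => 0) ->
  forall k a c, g a k.*2.+1 c = T a.+1 k.*2 c.
Proof.
case=> h1 h2 h3 h4 [t1 t2 t3 t4].
elim=> [|k IH] a c; first by rewrite h2.
rewrite doubleS.
have e1 := h1 a k.*2.+1 c.
have e2 := t1 a.+1 k.*2 c.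
rewrite IH in e1.
exact: alg1 e1 e2.
Qed.

Lemma Rng g T : isL g T -> isL T (fun _ _ _ => 0) ->
  forall A C, (A <= C)%N -> T A 0%N C = 0.
Proof.
move=> hg hT; have U := Ulem hg hT.
case: hg => h1 h2 h3 h4; case: hT => t1 t2 t3 t4.
have B : forall k c, T 1%N k.*2 c.+1 = 0.
  move=> k c; have e1 := h3 k.*2.+1 c; rewrite U in e1.
  exact: alg2 e1 (t1 0%N k.*2 c).
have P : forall a k c, T a.+1 k.*2 (a + c).+1 = 0.
  elim=> [|a IH] k c; first exact: B.
  have e := t1 a.+1 k.*2 (a + c).+1.
  rewrite -doubleS IH mul0rn add0r in e.
  by apply: (@mulrn_reg _ (a + c).+1); rewrite addSn.
case=> [|A] C hAC; first by rewrite h4.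
have := P A 0%N (C - A.+1)%N; rewrite double0.
by have -> : (A + (C - A.+1)).+1 = C by lia.
Qed.

Lemma Vlem g3 g2 g1 : isL g3 g2 -> isL g2 g1 -> isL g1 (fun _ _ _ => 0) ->
  forall a k, g3 a k.*2 a.+1 = g1 a.+1 k.*2 a.
Proof.
move=> h32 h21 h10; have U := Ulem h21 h10.
case: h32 => h1 h2 h3 h4; case: h10 => t1 t2 t3 t4.
elim=> [|a IH] k.
  by have := h3 k.*2 0%N; rewrite U mulr1n.
have e1 := h1 a k.*2 a.+1; rewrite U -doubleS IH in e1.
exact: alg3 e1 (t1 a.+1 k.*2 a).
Qed.

Lemma Crux (d : nat) (g1 g2 g3 : F) :
  isL g1 (fun _ _ _ => 0) -> isL g2 g1 -> isL g3 g2 ->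
  (forall a b c, g1 a.+1 b c *+ a.+1 + g2 a b.+1 c *+ b.+1 + g3 a b c.+1 *+ c.+1 = 0) ->
  (forall a b c, (a + b + c != d)%N -> g1 a b c = 0) ->
  (forall a b c, (a + b + c != d)%N -> g2 a b c = 0) ->
  (forall a b c, (a + b + c != d)%N -> g3 a b c = 0) ->
  g3 d 0%N 0%N = 0 ->
  (forall j, (j.*2 < d)%N -> g2 (d - j)%N 0%N j = 0) ->
  (forall j, (j.*2.+2 <= d)%N -> g1 (d - j)%N 0%N j = 0) ->
  forall a b c, [/\ g1 a b c = 0, g2 a b c = 0 & g3 a b c = 0].
Proof.
move=> h1 h2 h3 hdiv hom1 hom2 hom3 d3 d2 d1.
have G1 : forall a b c, g1 a b c = 0.
  apply: (Det h1) => // a c.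
  case: (eqVneq (a + 0 + c)%N d) => hd; last exact: hom1.
  case: (leqP a c) => hac; first exact: (Rng h2 h1).
  case: (eqVneq a c.+1) => [->|hne].
    have := hdiv c 0%N c.
    have -> : g2 c 1%N c = g1 c.+1 0%N c by case: h2 => _ -> _ _.
    have := Vlem h3 h2 h1 c 0%N; rewrite double0 => ->.
    rewrite -mulrSr -mulrnDr => /mulrn_reg; done.
  have -> : a = (d - c)%N by lia.
  apply: d1; lia.
have h20 : isL g2 (fun _ _ _ => 0) by apply: isL_ext h2 _.
have h30 : isL g3 g2 := h3.
have G2 : forall a b c, g2 a b c = 0.
  apply: (Det h20) => // a c.
  case: (eqVneq (a + 0 + c)%N d) => hd; last exact: hom2.
  case: (leqP a c) => hac; first exact: (Rng h3 h20).
  have -> : a = (d - c)%N by lia.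
  apply: d2; lia.
have h3' : isL g3 (fun _ _ _ => 0) by apply: isL_ext h3 _.
have G3 : forall a b c, g3 a b c = 0.
  apply: (Det h3') => // a [|c].
    case: (eqVneq (a + 0 + 0)%N d) => hd; last exact: hom3.
    by move: hd; rewrite !addn0 => ->.
  have := hdiv a 0%N c; rewrite G1 G2 mul0rn !add0r.
  exact: mulrn_reg.
by move=> a b c; rewrite G1 G2 G3.
Qed.
End Crux.

Definition mn (a b c : nat) : 'X_{1..3} := [multinom [tuple a; b; c]].
Lemma val_ix : val ix = 0%N. Proof. by rewrite /= inordK. Qed.
Lemma val_iy : val iy = 1%N. Proof. by rewrite /= inordK. Qed.
Lemma val_iz : val iz = 2%N. Proof. by rewrite /= inordK. Qed.
Lemma I3_cases (j : 'I_3) : [\/ j = ix, j = iy | j = iz].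
Proof.
case: j => [[|[|[|k]]] Hj] //.
- by constructor 1; apply: val_inj; rewrite val_ix.
- by constructor 2; apply: val_inj; rewrite val_iy.
- by constructor 3; apply: val_inj; rewrite val_iz.
Qed.
Lemma mnE a b c (j : 'I_3) : mn a b c j = nth 0%N [:: a; b; c] j.
Proof. by rewrite /mn multinomE (tnth_nth 0%N). Qed.
Lemma mn_ix a b c : mn a b c ix = a. Proof. by rewrite mnE val_ix. Qed.
Lemma mn_iy a b c : mn a b c iy = b. Proof. by rewrite mnE val_iy. Qed.
Lemma mn_iz a b c : mn a b c iz = c. Proof. by rewrite mnE val_iz. Qed.
Lemma ixy : (ix == iy) = false. Proof. by apply/negbTE/eqP => /(congr1 val); rewrite val_ix val_iy. Qed.
Lemma ixz : (ix == iz) = false. Proof. by apply/negbTE/eqP => /(congr1 val); rewrite val_ix val_iz. Qed.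
Lemma iyz : (iy == iz) = false. Proof. by apply/negbTE/eqP => /(congr1 val); rewrite val_iy val_iz. Qed.
Lemma iyx : (iy == ix) = false. Proof. by rewrite eq_sym ixy. Qed.
Lemma izx : (iz == ix) = false. Proof. by rewrite eq_sym ixz. Qed.
Lemma izy : (iz == iy) = false. Proof. by rewrite eq_sym iyz. Qed.
Definition ieqs := (eqxx, ixy, ixz, iyz, iyx, izx, izy).

Lemma mn_eta (m : 'X_{1..3}) : m = mn (m ix) (m iy) (m iz).
Proof.
apply/mnmP => j; case: (I3_cases j) => ->; by rewrite ?mn_ix ?mn_iy ?mn_iz.
Qed.

Lemma mnP (m m' : 'X_{1..3}) : m ix = m' ix -> m iy = m' iy -> m iz = m' iz -> m = m'.
Proof. by move=> h1 h2 h3; rewrite (mn_eta m) (mn_eta m') h1 h2 h3. Qed.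

Lemma mnDx a b c : (mn a b c + U_(ix))%MM = mn a.+1 b c.
Proof. by apply: mnP; rewrite mnmDE !mnm1E ?mn_ix ?mn_iy ?mn_iz !ieqs ?addn1 ?addn0. Qed.
Lemma mnDy a b c : (mn a b c + U_(iy))%MM = mn a b.+1 c.
Proof. by apply: mnP; rewrite mnmDE !mnm1E ?mn_ix ?mn_iy ?mn_iz !ieqs ?addn1 ?addn0. Qed.
Lemma mnDz a b c : (mn a b c + U_(iz))%MM = mn a b c.+1.
Proof. by apply: mnP; rewrite mnmDE !mnm1E ?mn_ix ?mn_iy ?mn_iz !ieqs ?addn1 ?addn0. Qed.
Lemma mnBx a b c : (mn a.+1 b c - U_(ix))%MM = mn a b c.
Proof. by rewrite -mnDx addmK. Qed.
Lemma mnBy a b c : (mn a b.+1 c - U_(iy))%MM = mn a b c.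
Proof. by rewrite -mnDy addmK. Qed.
Lemma mnBz a b c : (mn a b c.+1 - U_(iz))%MM = mn a b c.
Proof. by rewrite -mnDz addmK. Qed.
Lemma mdeg_mn a b c : mdeg (mn a b c) = (a + b + c)%N.
Proof. by rewrite mdegE !big_ord_recr big_ord0 /= add0n !mnE. Qed.

Section S.
Variable R : realFieldType.
Implicit Types p q : {mpoly R[3]}.
Definition cf p a b c := p@_(mn a b c).

Lemma mcoeffMXU p i m : (p * 'X_i)@_m = if (0 < m i)%N then p@_(m - U_(i))%MM else 0.
Proof.
case: ifP => h.
  have -> : m = (U_(i) + (m - U_(i)))%MM.
    by rewrite addmC submK // lep1mP -lt0n.
  by rewrite mcoeffMX addmC addmK.
rewrite [p]mpolyE mulr_suml raddf_sum /= big1 // => m' _.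
rewrite -scalerAl mcoeffZ -mpolyXD mcoeffX.
case: eqP => [e|]; last by rewrite mulr0.
by move: h; rewrite -e mnmDE mnm1E eqxx addn1.
Qed.

Lemma cfMx p a b c : cf (p * 'X_ix) a.+1 b c = cf p a b c.
Proof. by rewrite /cf mcoeffMXU mn_ix mnBx. Qed.
Lemma cfMx0 p b c : cf (p * 'X_ix) 0 b c = 0.
Proof. by rewrite /cf mcoeffMXU mn_ix. Qed.
Lemma cfMy p a b c : cf (p * 'X_iy) a b.+1 c = cf p a b c.
Proof. by rewrite /cf mcoeffMXU mn_iy mnBy. Qed.
Lemma cfMy0 p a c : cf (p * 'X_iy) a 0 c = 0.
Proof. by rewrite /cf mcoeffMXU mn_iy. Qed.
Lemma cfMz p a b c : cf (p * 'X_iz) a b c.+1 = cf p a b c.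
Proof. by rewrite /cf mcoeffMXU mn_iz mnBz. Qed.
Lemma cfMz0 p a b : cf (p * 'X_iz) a b 0 = 0.
Proof. by rewrite /cf mcoeffMXU mn_iz. Qed.
Lemma cfDx p a b c : cf (p^`M(ix)) a b c = cf p a.+1 b c *+ a.+1.
Proof. by rewrite /cf mcoeff_mderiv mnDx mn_ix. Qed.
Lemma cfDy p a b c : cf (p^`M(iy)) a b c = cf p a b.+1 c *+ b.+1.
Proof. by rewrite /cf mcoeff_mderiv mnDy mn_iy. Qed.
Lemma cfDz p a b c : cf (p^`M(iz)) a b c = cf p a b c.+1 *+ c.+1.
Proof. by rewrite /cf mcoeff_mderiv mnDz mn_iz. Qed.
Lemma cfD p q a b c : cf (p + q) a b c = cf p a b c + cf q a b c.
Proof. by rewrite /cf mcoeffD. Qed.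
Lemma cfB p q a b c : cf (p - q) a b c = cf p a b c - cf q a b c.
Proof. by rewrite /cf mcoeffB. Qed.
Lemma cfZ k p a b c : cf (k *: p) a b c = k * cf p a b c.
Proof. by rewrite /cf mcoeffZ. Qed.
Lemma cf_eq0 p : (forall a b c, cf p a b c = 0) -> p = 0.
Proof. by move=> h; apply/mpolyP => m; rewrite mcoeff0; have := h (m ix) (m iy) (m iz); rewrite /cf -mn_eta. Qed.
Lemma cf_homog p d a b c : p \is d.-homog -> (a + b + c != d)%N -> cf p a b c = 0.
Proof. by move=> hp hne; rewrite /cf (dhomog_nemf_coeff hp) //; move: hne; rewrite -mdeg_mn. Qed.
End S.

Section B.
Variable R : realFieldType.
Implicit Types p q : {mpoly R[3]}.

Lemma sum3 (V : zmodType) (F : 'I_3 -> V) : \sum_(j < 3) F j = F ix + F iy + F iz.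
Proof.
rewrite !big_ord_recl big_ord0 addr0 addrA.
by congr (F _ + F _ + F _); apply: val_inj; rewrite /= inordK.
Qed.

Definition Lop p := p^`M(iy) * 'X_ix + p^`M(iz) * 'X_iy.

Lemma isL_Lop p : isL (cf p) (cf (Lop p)).
Proof.
split=> *; rewrite /Lop ?cfD ?cfMx ?cfMy ?cfMx0 ?cfMy0 ?cfDy ?cfDz ?addr0 ?add0r ?mulr1n //.
Qed.

Lemma NT (j k : 'I_3) : (Nmat R)^T j k = if val j == (val k).+1 then 1 else 0.
Proof. by rewrite !mxE. Qed.

Lemma ad_ix (h : vfield R) : ad (Nmat R)^T h ix = Lop (h ix).
Proof.
rewrite /ad !sum3 !NT !val_ix !val_iy !val_iz /= !mpolyC0 !mul0r !mpolyC1 !mul1r.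
by rewrite !add0r !addr0 !mulr0 !add0r subr0 /Lop.
Qed.
Lemma ad_iy (h : vfield R) : ad (Nmat R)^T h iy = Lop (h iy) - h ix.
Proof.
rewrite /ad !sum3 !NT !val_ix !val_iy !val_iz /= !mpolyC0 !mul0r !mpolyC1 !mul1r.
by rewrite !add0r !addr0 !mulr0 !add0r /Lop.
Qed.
Lemma ad_iz (h : vfield R) : ad (Nmat R)^T h iz = Lop (h iz) - h iy.
Proof.
rewrite /ad !sum3 !NT !val_ix !val_iy !val_iz /= !mpolyC0 !mul0r !mpolyC1 !mul1r.
by rewrite !add0r !addr0 !mulr0 !add0r /Lop.
Qed.

Lemma div_eq (h : vfield R) : divergence h = (h ix)^`M(ix) + (h iy)^`M(iy) + (h iz)^`M(iz).
Proof. by rewrite /divergence sum3. Qed.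

Lemma inS_chain d (h : vfield R) : in_S d h ->
  [/\ Lop (h ix) = 0, Lop (h iy) = h ix, Lop (h iz) = h iy,
      divergence h = 0 & in_F d h].
Proof.
case=> [[hF hdiv] had].
have ex := congr1 (fun f => f ix) had; have ey := congr1 (fun f => f iy) had;
have ez := congr1 (fun f => f iz) had; move: ex ey ez => /=.
rewrite ad_ix ad_iy ad_iz => ex /eqP ey /eqP ez.
by split=> //; apply/eqP; rewrite -subr_eq0.
Qed.

Lemma span_zero d (h : vfield R) : in_S d h -> cf (h iz) d 0 0 = 0 ->
  (forall j, (j.*2 < d)%N -> cf (h iy) (d - j) 0 j = 0) ->
  (forall j, (j.*2.+2 <= d)%N -> cf (h ix) (d - j) 0 j = 0) -> forall k, h k = 0.
Proof.
move=> hS d3 d2 d1; case: (inS_chain hS) => e1 e2 e3 ediv hF.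
have h1 : isL (cf (h ix)) (fun _ _ _ => 0).
  by apply: isL_ext (isL_Lop _) _ => a b c; rewrite e1 /cf mcoeff0.
have h2 : isL (cf (h iy)) (cf (h ix)) by rewrite -e2; exact: isL_Lop.
have h3 : isL (cf (h iz)) (cf (h iy)) by rewrite -e3; exact: isL_Lop.
have hd : forall a b c, cf (h ix) a.+1 b c *+ a.+1 + cf (h iy) a b.+1 c *+ b.+1 + cf (h iz) a b c.+1 *+ c.+1 = 0.
  move=> a b c; have := congr1 (fun p => cf p a b c) ediv.
  by rewrite /= div_eq !cfD cfDx cfDy cfDz /cf mcoeff0.
have C := Crux h1 h2 h3 hd (fun a b c => cf_homog (hF ix)) (fun a b c => cf_homog (hF iy))
  (fun a b c => cf_homog (hF iz)) d3 d2 d1.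
move=> k; case: (I3_cases k) => ->; apply: cf_eq0 => a b c; by case: (C a b c).
Qed.
End B.

Section C.
Variable R : realFieldType.
Variable t : 2.-tuple {mpoly R[3]}.
Let T0 := t`_ax.
Let T1 := t`_abeta.

Lemma I2_cases (j : 'I_2) : j = ax \/ j = abeta.
Proof.
case: j => [[|[|k]] Hj] //.
- by left; apply: val_inj; rewrite /= inordK.
- by right; apply: val_inj; rewrite /= inordK.
Qed.
Lemma axb : (ax == abeta) = false.
Proof. by apply/negbTE/eqP => /(congr1 val); rewrite /= !inordK. Qed.

Lemma mderivXU n (i j : 'I_n) : ('X_i : {mpoly R[n]})^`M(j) = (i == j)%:R.
Proof.
rewrite mderivX mnm1E; case: eqP => [->|_]; last by rewrite scale0r.
by rewrite -{1}(add0m (U_(j))%MM) addmK mpolyX0 scale1r.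
Qed.

Definition Ch (p : {mpoly R[2]}) := forall i : 'I_3,
  (p \mPo t)^`M(i) = (p^`M(ax) \mPo t) * T0^`M(i) + (p^`M(abeta) \mPo t) * T1^`M(i).

Lemma Ch_add p q : Ch p -> Ch q -> Ch (p + q).
Proof. move=> hp hq i; rewrite comp_mpolyD !mderivD hp hq !comp_mpolyD; ring. Qed.

Lemma Ch_scale c p : Ch p -> Ch (c *: p).
Proof.
move=> hp i; rewrite !comp_mpolyZ !mderivZ hp !comp_mpolyZ !scalerDr -!scalerAl //.
Qed.

Lemma Ch_mul p q : Ch p -> Ch q -> Ch (p * q).
Proof.
move=> hp hq i; rewrite rmorphM /= !mderivM hp hq !rmorphD !rmorphM /=; ring.
Qed.

Lemma Ch1 : Ch 1.
Proof.
move=> i; rewrite rmorph1 -mpolyC1 !mderivC !comp_mpoly0 !mul0r addr0; done.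
Qed.

Lemma ChX (j : 'I_2) : Ch 'X_j.
Proof.
move=> i; rewrite !comp_mpolyXU !mderivXU.
case: (I2_cases j) => ->; rewrite ?eqxx ?axb 1?eq_sym ?axb /=.
- by rewrite rmorph1 raddf0 mul1r mul0r addr0.
- by rewrite raddf0 rmorph1 mul1r mul0r add0r.
Qed.

Lemma Ch_exp p k : Ch p -> Ch (p ^+ k).
Proof. by move=> hp; elim: k => [|k IH]; [rewrite expr0; exact: Ch1 | rewrite exprS; exact: Ch_mul]. Qed.

Lemma Ch_all p : Ch p.
Proof.
elim/mpolyind: p => [|c m p _ _ IH].
  by move=> i; rewrite !comp_mpoly0 !mderiv0 !comp_mpoly0 !mul0r addr0.
apply: Ch_add => //; apply: Ch_scale.
rewrite mpolyXE_id; apply: (big_ind Ch Ch1 Ch_mul) => j _.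
exact/Ch_exp/ChX.
Qed.
End C.

Section D.
Variable R : realFieldType.
Implicit Types p q : {mpoly R[3]}.
Definition tt3 : 2.-tuple {mpoly R[3]} := [tuple ('X_ix : {mpoly R[3]}); beta R].
Lemma tt3_ax : tt3`_ax = 'X_ix. Proof. by rewrite /= inordK. Qed.
Lemma tt3_ab : tt3`_abeta = beta R. Proof. by rewrite /= inordK. Qed.

Lemma dnat n (i : 'I_3) : (n%:R : {mpoly R[3]})^`M(i) = 0.
Proof. by rewrite mderivMn -mpolyC1 mderivC mul0rn. Qed.

Lemma dbeta_x : (beta R)^`M(ix) = 2%:R * 'X_iz.
Proof. rewrite /beta mderivB [_ ^+ 2]expr2 !mderivM !mderivXU !ieqs /= dnat; ring. Qed.
Lemma dbeta_y : (beta R)^`M(iy) = - (2%:R * 'X_iy).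
Proof. rewrite /beta mderivB [_ ^+ 2]expr2 !mderivM !mderivXU !ieqs /= dnat; ring. Qed.
Lemma dbeta_z : (beta R)^`M(iz) = 2%:R * 'X_ix.
Proof. rewrite /beta mderivB [_ ^+ 2]expr2 !mderivM !mderivXU !ieqs /= dnat; ring. Qed.

Section P.
Variable psi : {mpoly R[2]}.
Let P := subst_xb psi.
Let Qx := subst_xb (psi^`M(ax)).
Let Qb := subst_xb (psi^`M(abeta)).
Lemma dPx : P^`M(ix) = Qx + Qb * (2%:R * 'X_iz).
Proof. by rewrite /P /subst_xb (Ch_all tt3 psi ix) tt3_ax tt3_ab dbeta_x mderivXU eqxx mulr1. Qed.
Lemma dPy : P^`M(iy) = Qb * - (2%:R * 'X_iy).
Proof. by rewrite /P /subst_xb (Ch_all tt3 psi iy) tt3_ax tt3_ab dbeta_y mderivXU ieqs mulr0 add0r. Qed.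
Lemma dPz : P^`M(iz) = Qb * (2%:R * 'X_ix).
Proof. by rewrite /P /subst_xb (Ch_all tt3 psi iz) tt3_ax tt3_ab dbeta_z mderivXU ieqs mulr0 add0r. Qed.
End P.
End D.

Section E.
Variable R : realFieldType.
Implicit Types p q : {mpoly R[3]}.

Lemma hof_x (a b c : {mpoly R[2]}) : h_of a b c ix = 'X_ix ^+ 2 * subst_xb a.
Proof. by rewrite /h_of eqxx. Qed.
Lemma hof_y (a b c : {mpoly R[2]}) : h_of a b c iy = 'X_ix * 'X_iy * subst_xb a + 'X_ix * subst_xb b.
Proof. by rewrite /h_of !ieqs. Qed.
Lemma hof_z (a b c : {mpoly R[2]}) : h_of a b c iz =
  (2%:R)^-1 *: ('X_iy ^+ 2 * subst_xb a) + 'X_iy * subst_xb b + subst_xb c.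
Proof. by rewrite /h_of !ieqs. Qed.

Lemma half (A : {mpoly R[3]}) : (2%:R : R)^-1 *: (2%:R * A) = A.
Proof.
rewrite mulr_natl -scaler_nat scalerA mulVf ?scale1r //.
by rewrite pnatr_eq0.
Qed.

Lemma subst_cond (a c : {mpoly R[2]}) : psi_cond a c ->
  - (2%:R * subst_xb (c^`M(abeta))) =
  'X_ix * subst_xb (a^`M(ax)) + 3%:R * subst_xb a + beta R * subst_xb (a^`M(abeta)).
Proof.
move=> h; have := congr1 (@subst_xb R) h.
rewrite /subst_xb comp_mpolyN comp_mpolyZ !comp_mpolyD !rmorphM !comp_mpolyZ /= !comp_mpolyXU /= !inordK //.
by rewrite !scaler_nat !mulr_natl.
Qed.


Lemma hX (i : 'I_3) : ('X_i : {mpoly R[3]}) \is 1.-homog.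
Proof. by rewrite dhomogX /= mdeg1. Qed.

Lemma homM' p q m n k : p \is m.-homog -> q \is n.-homog -> (m + n)%N = k -> p * q \is k.-homog.
Proof. by move=> hp hq <-; apply: dhomogM. Qed.

Lemma hz_pos (k : int) p : homog_z k p -> (0 <= k) -> p \is `|k|%N.-homog.
Proof. rewrite /homog_z => h hk; move: h; have -> : (k < 0) = false by lia. done. Qed.
Lemma hz_neg (k : int) p : homog_z k p -> (k < 0) -> p = 0.
Proof. by rewrite /homog_z => h hk; move: h; rewrite hk. Qed.

Lemma Yy (a : {mpoly R[2]}) : ('X_iy ^+ 2 * subst_xb a)^`M(iy) =
  2%:R * ('X_iy * subst_xb a - 'X_iy ^+ 3 * subst_xb (a^`M(abeta))).
Proof. rewrite mderivM [_ ^+ 2]expr2 mderivM !mderivXU !ieqs /= dPy; ring. Qed.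
Lemma Yz (a : {mpoly R[2]}) : ('X_iy ^+ 2 * subst_xb a)^`M(iz) =
  2%:R * ('X_iy ^+ 2 * subst_xb (a^`M(abeta)) * 'X_ix).
Proof. rewrite mderivM [_ ^+ 2]expr2 mderivM !mderivXU !ieqs /= dPz; ring. Qed.

Lemma div_hof (a b c : {mpoly R[2]}) : psi_cond a c -> divergence (h_of a b c) = 0.
Proof.
move=> hcond; have E := subst_cond hcond.
rewrite div_eq hof_x hof_y hof_z !mderivD mderivZ Yz half !mderivM.
rewrite ?[_ ^+ 2]expr2 ?mderivM !mderivXU !ieqs /= ?dPx ?dPy ?dPz.
apply: (@eq_trans _ _ ('X_ix * (- (2%:R * subst_xb (c^`M(abeta))) + 2%:R * subst_xb (c^`M(abeta))))).
  rewrite E /beta; ring.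
ring.
Qed.

Lemma ad_hof (a b c : {mpoly R[2]}) : ad (Nmat R)^T (h_of a b c) = (fun _ => 0).
Proof.
apply: functional_extensionality => i; case: (I3_cases i) => ->.
- rewrite ad_ix /Lop hof_x ?mderivM ?[_ ^+ 2]expr2 ?mderivM !mderivXU !ieqs /= !dPy !dPz; ring.
- rewrite ad_iy /Lop hof_y hof_x !mderivD ?mderivM ?[_ ^+ 2]expr2 ?mderivM !mderivXU !ieqs /= !dPy !dPz; ring.
- rewrite ad_iz /Lop hof_z hof_y !mderivD !mderivZ Yy Yz !half ?mderivM ?mderivXU !ieqs /= !dPy !dPz; ring.
Qed.

Lemma back d (a b c : {mpoly R[2]}) : (1 <= d)%N ->
  homog_z (d%:Z - 2) (subst_xb a) -> homog_z (d%:Z - 1) (subst_xb b) ->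
  homog_z d%:Z (subst_xb c) -> psi_cond a c -> in_S d (h_of a b c).
Proof.
move=> hd ha hb hc hcond.
set P1 := subst_xb a; set P2 := subst_xb b; set P3 := subst_xb c.
have hb' : P2 \is (d - 1)%N.-homog.
  have hk : (0 <= d%:Z - 1) by lia.
  have := hz_pos hb hk; rewrite (_ : `|d%:Z - 1|%N = (d - 1)%N) //; lia.
have hc' : P3 \is d.-homog by move: hc; rewrite /homog_z.
have ha' : P1 = 0 \/ ((2 <= d)%N /\ P1 \is (d - 2)%N.-homog).
  case: (leqP 2 d) => h2.
    right; split => //; have hk : (0 <= d%:Z - 2) by lia.
    have := hz_pos ha hk; rewrite (_ : `|d%:Z - 2|%N = (d - 2)%N) //; lia.
  left; apply: (hz_neg ha); lia.
have hP1 : forall p e, p \is e.-homog -> p * P1 \is (d + e - 2)%N.-homog.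
  move=> p e hp; case: ha' => [->|[h2 h1]]; first by rewrite mulr0 rpred0.
  apply: homM' hp h1 _; lia.
split; first split.
- move=> i; case: (I3_cases i) => ->.
  + rewrite hof_x; have := hP1 _ _ (dhomogMn 2 (hX ix)).
    by have -> : (d + 1 * 2 - 2 = d)%N by lia.
  + rewrite hof_y; apply: rpredD.
      have := hP1 _ _ (dhomogM (hX ix) (hX iy)).
      by have -> : (d + (1 + 1) - 2 = d)%N by lia.
    by apply: homM' (hX ix) hb' _; lia.
  + rewrite hof_z; apply: rpredD => //; apply: rpredD.
      apply: rpredZ; have := hP1 _ _ (dhomogMn 2 (hX iy)).
      by have -> : (d + 1 * 2 - 2 = d)%N by lia.
    by apply: homM' (hX iy) hb' _; lia.
- exact: div_hof.
- exact: ad_hof.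
Qed.
End E.

Section F.
Variable R : realFieldType.
Implicit Types p q : {mpoly R[3]}.

Definition mn2 (e j : nat) : 'X_{1..2} := [multinom [tuple e; j]].
Lemma mn2_ax e j : mn2 e j ax = e. Proof. by rewrite /mn2 multinomE (tnth_nth 0%N) /= inordK. Qed.
Lemma mn2_ab e j : mn2 e j abeta = j. Proof. by rewrite /mn2 multinomE (tnth_nth 0%N) /= inordK. Qed.
Lemma mn2P (m m' : 'X_{1..2}) : m ax = m' ax -> m abeta = m' abeta -> m = m'.
Proof. move=> h1 h2; apply/mnmP => k; by case: (I2_cases k) => ->. Qed.

Lemma bxa : (abeta == ax) = false. Proof. by rewrite eq_sym axb. Qed.
Definition psiM e j : {mpoly R[2]} := 'X_[mn2 e j].

Lemma subst_psiM e j : subst_xb (psiM e j) = 'X_ix ^+ e * beta R ^+ j.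
Proof.
rewrite /subst_xb /psiM comp_mpolyX !big_ord_recl big_ord0 mulr1.
have -> : (lift ord0 ord0 : 'I_2) = abeta by apply: val_inj; rewrite /= inordK.
have -> : (ord0 : 'I_2) = ax by apply: val_inj; rewrite /= inordK.
by rewrite mn2_ax mn2_ab !(tnth_nth 0) /= !inordK.
Qed.
Lemma dpsi_ax e j : (psiM e j)^`M(ax) = e%:R *: psiM e.-1 j.
Proof.
rewrite /psiM mderivX mn2_ax; congr (_ *: 'X_[_]); apply: mn2P;
by rewrite mnmBE mnm1E ?mn2_ax ?mn2_ab ?eqxx ?axb ?subn1 ?subn0.
Qed.
Lemma dpsi_ab e j : (psiM e j)^`M(abeta) = j%:R *: psiM e j.-1.
Proof.
rewrite /psiM mderivX mn2_ab; congr (_ *: 'X_[_]); apply: mn2P;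
by rewrite mnmBE mnm1E ?mn2_ax ?mn2_ab ?eqxx ?axb ?bxa ?subn1 ?subn0.
Qed.
Lemma Xax_psi e j : 'X_ax * psiM e j = psiM e.+1 j.
Proof.
rewrite /psiM -mpolyXD; congr 'X_[_]; apply: mn2P;
by rewrite mnmDE mnm1E ?mn2_ax ?mn2_ab ?eqxx ?axb ?bxa.
Qed.
Lemma Xab_psi e j : 'X_abeta * psiM e j = psiM e j.+1.
Proof.
rewrite /psiM -mpolyXD; congr 'X_[_]; apply: mn2P;
by rewrite mnmDE mnm1E ?mn2_ax ?mn2_ab ?eqxx ?axb ?bxa ?add1n ?add0n.
Qed.
Lemma Xax_dpsi e j : 'X_ax * (psiM e j)^`M(ax) = e%:R *: psiM e j.
Proof. by rewrite dpsi_ax -scalerAr Xax_psi; case: e => [|e] //=; rewrite !scale0r. Qed.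
Lemma Xab_dpsi e j : 'X_abeta * (psiM e j)^`M(abeta) = j%:R *: psiM e j.
Proof. by rewrite dpsi_ab -scalerAr Xab_psi; case: j => [|j] //=; rewrite !scale0r. Qed.

Definition gam e j : R := - ((e + 3 + j)%N%:R) / (2%:R * (j.+1)%:R).

Lemma cond_B e j : psi_cond (psiM e j) (gam e j *: psiM e j.+1).
Proof.
rewrite /psi_cond mderivZ dpsi_ab /= Xax_dpsi Xab_dpsi !scalerA.
rewrite -!scalerDl; rewrite -scaleNr; congr (_ *: _).
rewrite /gam !natrD; field.
by rewrite addrC natr1 pnatr_eq0.
Qed.
Lemma cond_0 : psi_cond (0 : {mpoly R[2]}) 0.
Proof. by rewrite /psi_cond !mderiv0 !scaler0 !mulr0 oppr0 !addr0. Qed.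
Lemma cond_C e : psi_cond 0 (psiM e 0).
Proof. by rewrite /psi_cond dpsi_ab !mderiv0 !scale0r !scaler0 !mulr0 oppr0 !addr0. Qed.

Lemma mn_eqE a b c a' b' c' : (mn a b c == mn a' b' c') = [&& a == a', b == b' & c == c'].
Proof.
apply/eqP/and3P => [e|[/eqP-> /eqP-> /eqP->] //].
have e1 := congr1 (fun m : 'X_{1..3} => m ix) e.
have e2 := congr1 (fun m : 'X_{1..3} => m iy) e.
have e3 := congr1 (fun m : 'X_{1..3} => m iz) e.
by move: e1 e2 e3; rewrite /= !mn_ix !mn_iy !mn_iz => -> -> ->; rewrite !eqxx.
Qed.

Lemma cfXe e a c : cf ('X_ix ^+ e : {mpoly R[3]}) a 0 c = ((a == e) && (c == 0%N))%:R.
Proof.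
rewrite /cf mpolyXn mcoeffX.
have -> : (U_(ix) *+ e)%MM = mn e 0 0.
  by apply: mnP; rewrite mulmnE mnm1E ?mn_ix ?mn_iy ?mn_iz !ieqs ?mul1n ?mul0n.
by rewrite mn_eqE /= eq_sym [c == _]eq_sym.
Qed.

Lemma cfMbeta q a c : cf (q * beta R) a 0 c =
  (match a, c with | a'.+1, c'.+1 => cf q a' 0 c' *+ 2 | _, _ => 0 end).
Proof.
have -> : q * beta R = (q * 'X_iz * 'X_ix) *+ 2 - (q * 'X_iy) * 'X_iy by rewrite /beta; ring.
rewrite cfB cfMy0 subr0 /cf mcoeffMn -/(cf _ a 0 c).
case: a => [|a]; first by rewrite cfMx0 mul0rn.
rewrite cfMx; case: c => [|c]; first by rewrite cfMz0 mul0rn.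
by rewrite cfMz.
Qed.

Lemma cfXB e j a c : cf ('X_ix ^+ e * beta R ^+ j) a 0 c =
  if (a == e + j)%N && (c == j) then 2%:R ^+ j else 0.
Proof.
elim: j a c => [|j IH] a c.
  by rewrite expr0 mulr1 cfXe addn0; case: ifP.
rewrite exprSr mulrA cfMbeta.
case: a => [|a]; first by rewrite addnS.
case: c => [|c]; first by rewrite andbF.
rewrite IH addnS !eqSS; case: ifP => _; last by rewrite mul0rn.
by rewrite exprSr mulr_natr.
Qed.

End F.

Section G.
Variable R : realFieldType.
Variable d : nat.
Hypothesis hd : (1 <= d)%N.

Definition bpsi (i : nat) : {mpoly R[2]} * {mpoly R[2]} * {mpoly R[2]} :=
  match i with
  | 0 => (0, 0, psiM R d 0)
  | k.+1 => if odd k then (psiM R (d - k.+1) k./2, 0, gam R (d - k.+1) k./2 *: psiM R (d - k.+1) k./2.+1)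
            else (0, psiM R (d - k.+1) k./2, 0)
  end.
Definition bh (i : nat) : vfield R := h_of (bpsi i).1.1 (bpsi i).1.2 (bpsi i).2.

Lemma hz0 (k : int) : homog_z k (subst_xb (0 : {mpoly R[2]})).
Proof. by rewrite /homog_z /subst_xb comp_mpoly0; case: ifP => // _; exact: rpred0. Qed.

Lemma hz_of (k : int) n (P : {mpoly R[3]}) : k = n%:Z -> P \is n.-homog -> homog_z k P.
Proof. by move=> -> hP; rewrite /homog_z ltz_nat /=. Qed.

Lemma homog_beta : beta R \is 2.-homog.
Proof.
rewrite /beta; apply: rpredB.
  have h1 : (2%:R * 'X_iz : {mpoly R[3]}) \is 1.-homog.
    by rewrite mulr_natl; apply: rpredMn; exact: hX R iz.
  exact: (homM' h1 (hX R ix) (erefl 2%N)).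
by have := dhomogMn 2 (hX R iy).
Qed.

Lemma homog_XB e j : ('X_ix ^+ e * beta R ^+ j : {mpoly R[3]}) \is (e + j.*2).-homog.
Proof.
apply: (homM' (dhomogMn e (hX R ix)) (dhomogMn j homog_beta)); lia.
Qed.

Lemma bpsi_ok i : (i <= d)%N ->
  [/\ homog_z (d%:Z - 2) (subst_xb (bpsi i).1.1),
      homog_z (d%:Z - 1) (subst_xb (bpsi i).1.2),
      homog_z d%:Z (subst_xb (bpsi i).2)
    & psi_cond (bpsi i).1.1 (bpsi i).2].
Proof.
case: i => [|k] hi /=.
  split; [exact: hz0 | exact: hz0 | | exact: cond_C].
  by apply: (@hz_of _ d); rewrite // subst_psiM; have := homog_XB d 0; rewrite addn0.
case: ifP => hk /=.
  split; [ | exact: hz0 | | exact: cond_B].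
    apply: (@hz_of _ (d - 2)); first lia.
    rewrite subst_psiM; have := homog_XB (d - k.+1) k./2.
    by have -> : (d - k.+1 + k./2.*2 = d - 2)%N by lia.
  apply: (@hz_of _ d) => //.
  rewrite /subst_xb comp_mpolyZ; apply: rpredZ; rewrite -/(subst_xb _) subst_psiM.
  have := homog_XB (d - k.+1) k./2.+1.
  by have -> : (d - k.+1 + k./2.+1.*2 = d)%N by lia.
split; [exact: hz0 | | exact: hz0 | exact: cond_0].
apply: (@hz_of _ (d - 1)); first lia.
rewrite subst_psiM; have := homog_XB (d - k.+1) k./2.
by have -> : (d - k.+1 + k./2.*2 = d - 1)%N by lia.
Qed.

Lemma bh_inS i : (i <= d)%N -> in_S d (bh i).
Proof. by move=> hi; case: (bpsi_ok hi) => h1 h2 h3 h4; exact: back hd h1 h2 h3 h4. Qed.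
Lemma cfhx (a b c : {mpoly R[2]}) A C : cf (h_of a b c ix) A 0 C = cf ('X_ix ^+ 2 * subst_xb a) A 0 C.
Proof. by rewrite hof_x. Qed.
Lemma cfhy (a b c : {mpoly R[2]}) A C : cf (h_of a b c iy) A 0 C = cf ('X_ix * subst_xb b) A 0 C.
Proof. by rewrite hof_y cfD mulrAC cfMy0 add0r. Qed.
Lemma cfhz (a b c : {mpoly R[2]}) A C : cf (h_of a b c iz) A 0 C = cf (subst_xb c) A 0 C.
Proof.
rewrite hof_z !cfD cfZ.
have -> : ('X_iy ^+ 2 * subst_xb a : {mpoly R[3]}) = ('X_iy * subst_xb a) * 'X_iy by ring.
have -> : ('X_iy * subst_xb b : {mpoly R[3]}) = subst_xb b * 'X_iy by ring.
by rewrite !cfMy0 mulr0 !add0r.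
Qed.
Lemma subst0 : subst_xb (0 : {mpoly R[2]}) = 0.
Proof. exact: comp_mpoly0. Qed.
Lemma substZ (g : R) (p : {mpoly R[2]}) : subst_xb (g *: p) = g *: subst_xb p.
Proof. exact: comp_mpolyZ. Qed.
Lemma X2XB e j : ('X_ix ^+ 2 * ('X_ix ^+ e * beta R ^+ j) : {mpoly R[3]}) = 'X_ix ^+ (e + 2) * beta R ^+ j.
Proof. by rewrite mulrA -exprD addnC. Qed.
Lemma X1XB e j : ('X_ix * ('X_ix ^+ e * beta R ^+ j) : {mpoly R[3]}) = 'X_ix ^+ (e + 1) * beta R ^+ j.
Proof. by rewrite mulrA -exprS addn1. Qed.
Lemma cf0 A B C : cf (0 : {mpoly R[3]}) A B C = 0.
Proof. exact: mcoeff0. Qed.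

Definition phi (i : nat) (h : vfield R) : R :=
  match i with
  | 0 => cf (h iz) d 0 0
  | k.+1 => if odd k then cf (h ix) (d - k./2) 0 k./2 else cf (h iy) (d - k./2) 0 k./2
  end.
Definition w (i : nat) : R := match i with 0 => 1 | k.+1 => 2%:R ^+ k./2 end.

Lemma phi_b i l : (i <= d)%N -> (l <= d)%N -> phi i (bh l) = if i == l then w i else 0.
Proof.
move=> hi hl.
case: i hi => [|k] hi; case: l hl => [|k'] hl; rewrite /phi /bh /bpsi /w;
  repeat (case: ifP => ?) => /=;
  rewrite ?cfhx ?cfhy ?cfhz ?subst0 ?mulr0 ?cf0 ?substZ ?cfZ ?subst_psiM ?X2XB ?X1XB ?cfXB //.
all: try by rewrite addn0 !eqxx.
all: try by rewrite andbF mulr0.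
all: try (case: ifP => H).
all: first [ done | (exfalso; lia) | (have E : k = k' by lia); subst k'; done ].
Qed.
End G.


Section H.
Variable R : realFieldType.
Variable d : nat.
Implicit Types f g : vfield R.

Lemma LopD p q : Lop (p + q) = Lop p + Lop q :> {mpoly R[3]}.
Proof. by rewrite /Lop !mderivD; ring. Qed.
Lemma LopZ (c : R) (p : {mpoly R[3]}) : Lop (c *: p) = c *: Lop p.
Proof. by rewrite /Lop !mderivZ scalerDr -!scalerAl. Qed.

Lemma inS_of f : in_F d f -> divergence f = 0 -> Lop (f ix) = 0 -> Lop (f iy) = f ix ->
  Lop (f iz) = f iy -> in_S d f.
Proof.
move=> hF hd e1 e2 e3; split => //.
apply: functional_extensionality => i; case: (I3_cases i) => ->.
- by rewrite ad_ix.
- by rewrite ad_iy e2 subrr.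
- by rewrite ad_iz e3 subrr.
Qed.

Lemma inS_add f g : in_S d f -> in_S d g -> in_S d (fun k => f k + g k).
Proof.
move=> hf hg; case: (inS_chain hf) => f1 f2 f3 fd fF; case: (inS_chain hg) => g1 g2 g3 gd gF.
apply: inS_of => /=.
- by move=> i; apply: rpredD.
- rewrite div_eq /= !mderivD.
  transitivity ((f ix)^`M(ix) + (f iy)^`M(iy) + (f iz)^`M(iz) + ((g ix)^`M(ix) + (g iy)^`M(iy) + (g iz)^`M(iz))); first ring.
  by rewrite -!div_eq fd gd addr0.
- by rewrite LopD f1 g1 addr0.
- by rewrite LopD f2 g2.
- by rewrite LopD f3 g3.
Qed.

Lemma inS_scale (c : R) f : in_S d f -> in_S d (fun k => c *: f k).
Proof.
move=> hf; case: (inS_chain hf) => f1 f2 f3 fd fF.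
apply: inS_of => /=.
- by move=> i; apply: rpredZ.
- by rewrite div_eq /= !mderivZ -!scalerDr -div_eq fd scaler0.
- by rewrite LopZ f1 scaler0.
- by rewrite LopZ f2.
- by rewrite LopZ f3.
Qed.

Lemma inS_zero : in_S d (fun _ => 0 : {mpoly R[3]}).
Proof.
apply: inS_of => /=.
- by move=> i; apply: rpred0.
- by rewrite div_eq !mderiv0 !addr0.
- by rewrite /Lop !mderiv0 !mul0r addr0.
- by rewrite /Lop !mderiv0 !mul0r addr0.
- by rewrite /Lop !mderiv0 !mul0r addr0.
Qed.

Lemma inS_sum n (c : 'I_n -> R) (F : 'I_n -> vfield R) :
  (forall i, in_S d (F i)) -> in_S d (fun k => \sum_(i < n) c i *: F i k).
Proof.
move=> hF; elim: n c F hF => [|n IH] c F hF.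
  have -> : (fun k : 'I_3 => \sum_(i < 0) c i *: F i k) = (fun _ => 0).
    by apply: functional_extensionality => k; rewrite big_ord0.
  exact: inS_zero.
have -> : (fun k : 'I_3 => \sum_(i < n.+1) c i *: F i k) =
  (fun k => (fun k => \sum_(i < n) c (widen_ord (leqnSn n) i) *: F (widen_ord (leqnSn n) i) k) k
            + (fun k => c ord_max *: F ord_max k) k).
  by apply: functional_extensionality => k; rewrite big_ord_recr.
apply: inS_add; first by apply: IH.
exact: inS_scale.
Qed.

Lemma inS_sub f g : in_S d f -> in_S d g -> in_S d (fun k => f k - g k).
Proof.
move=> hf hg.
have -> : (fun k => f k - g k) = (fun k => f k + (fun k => (-1) *: g k) k).
  by apply: functional_extensionality => k; rewrite scaleN1r.
by apply: inS_add => //; apply: inS_scale.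
Qed.
End H.

Section I.
Variable R : realFieldType.
Variable d : nat.
Hypothesis hd : (1 <= d)%N.

Lemma cf_sum n (c : 'I_n -> R) (P : 'I_n -> {mpoly R[3]}) A B C :
  cf (\sum_(i < n) c i *: P i) A B C = \sum_(i < n) c i * cf (P i) A B C.
Proof. rewrite /cf raddf_sum; apply: eq_bigr => i _ /=; exact: (cfZ (c i) (P i) A B C). Qed.

Lemma phi_sum j n (c : 'I_n -> R) (F : 'I_n -> vfield R) :
  phi d j (fun k => \sum_(i < n) c i *: F i k) = \sum_(i < n) c i * phi d j (F i).
Proof. rewrite /phi; case: j => [|j]; [ | case: ifP => _ ]; exact: cf_sum. Qed.

Lemma phi_sub j (f g : vfield R) : phi d j (fun k => f k - g k) = phi d j f - phi d j g.
Proof. rewrite /phi; case: j => [|j]; [ | case: ifP => _ ]; exact: cfB. Qed.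

Lemma w_neq0 i : w R i != 0.
Proof. by case: i => [|i] /=; rewrite ?oner_neq0 // expf_neq0 // pnatr_eq0. Qed.

Lemma sum_delta (c : 'I_d.+1 -> R) j : (j <= d)%N ->
  \sum_(i < d.+1) c i * phi d j (bh R d i) = c (inord j) * w R j.
Proof.
move=> hj; rewrite (bigD1 (inord j)) //= big1 ?addr0.
  by rewrite phi_b // ?inordK ?eqxx //; exact: leq_ord.
move=> i hi; rewrite phi_b //; last exact: leq_ord.
case: eqP => [e|]; last by rewrite mulr0.
by move: hi; rewrite e inord_val eqxx.
Qed.

Lemma span_S h : in_S d h -> exists c : 'I_d.+1 -> R, forall k, h k = \sum_(i < d.+1) c i *: bh R d i k.
Proof.
move=> hS; set c := fun i : 'I_d.+1 => phi d i h / w R i.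
exists c.
set h' := fun k => h k - \sum_(i < d.+1) c i *: bh R d i k.
have hS' : in_S d h'.
  apply: inS_sub => //; apply: inS_sum => i; apply: bh_inS => //; exact: leq_ord.
have ph : forall j, (j <= d)%N -> phi d j h' = 0.
  move=> j hj; rewrite /h' phi_sub phi_sum sum_delta // /c inordK //.
  by rewrite divfK ?w_neq0 // subrr.
have Z := span_zero hS' (ph 0%N (leq0n _)).
have Z2 : forall j, (j.*2 < d)%N -> cf (h' iy) (d - j) 0 j = 0.
  move=> j hj; have := ph j.*2.+1 hj; rewrite /phi odd_double doubleK //.
have Z1 : forall j, (j.*2.+2 <= d)%N -> cf (h' ix) (d - j) 0 j = 0.
  move=> j hj; have := ph j.*2.+2 hj; rewrite /phi /= odd_double /=.
  by rewrite uphalf_double.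
move=> k; have := Z Z2 Z1 k; rewrite /h' => /eqP; rewrite subr_eq0 => /eqP.
done.
Qed.
End I.

Section J.
Variable R : realFieldType.
Implicit Types a b c : {mpoly R[2]}.

Lemma substD a b : subst_xb (a + b) = subst_xb a + subst_xb b.
Proof. exact: comp_mpolyD. Qed.

Lemma cond_add a c a' c' : psi_cond a c -> psi_cond a' c' -> psi_cond (a + a') (c + c').
Proof.
rewrite /psi_cond !mderivD => e1 e2.
rewrite scalerDr opprD e1 e2 !mulrDr !scalerDr; ring.
Qed.

Lemma cond_scale (g : R) a c : psi_cond a c -> psi_cond (g *: a) (g *: c).
Proof.
rewrite /psi_cond !mderivZ => e.
rewrite scalerA mulrC -scalerA -scalerN e !scalerDr -!scalerAr; congr (_ + _ + _); by rewrite !scalerA mulrC.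
Qed.

Lemma cond_sum n (g : 'I_n -> R) (A C : 'I_n -> {mpoly R[2]}) :
  (forall i, psi_cond (A i) (C i)) -> psi_cond (\sum_(i < n) g i *: A i) (\sum_(i < n) g i *: C i).
Proof.
elim: n g A C => [|n IH] g A C h; first by rewrite !big_ord0; exact: cond_0.
rewrite !big_ord_recr /=; apply: cond_add; first by apply: IH.
exact: cond_scale.
Qed.

Lemma hz_sum (k : int) n (g : 'I_n -> R) (A : 'I_n -> {mpoly R[2]}) :
  (forall i, homog_z k (subst_xb (A i))) -> homog_z k (subst_xb (\sum_(i < n) g i *: A i)).
Proof.
move=> h.
have -> : subst_xb (\sum_(i < n) g i *: A i) = \sum_(i < n) g i *: subst_xb (A i).
  by rewrite /subst_xb raddf_sum; apply: eq_bigr => i _ /=; exact: comp_mpolyZ.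
rewrite /homog_z; case: ifP => hk.
  by rewrite big1 // => i _; have := h i; rewrite /homog_z hk => ->; rewrite scaler0.
by apply: rpred_sum => i _; apply: rpredZ; have := h i; rewrite /homog_z hk.
Qed.

Lemma hof_add a b c a' b' c' k : h_of (a + a') (b + b') (c + c') k = h_of a b c k + h_of a' b' c' k.
Proof.
case: (I3_cases k) => ->; rewrite ?hof_x ?hof_y ?hof_z !substD.
- ring.
- ring.
- rewrite !mulrDr !scalerDr; ring.
Qed.

Lemma hof_scale (g : R) a b c k : h_of (g *: a) (g *: b) (g *: c) k = g *: h_of a b c k.
Proof.
case: (I3_cases k) => ->; rewrite ?hof_x ?hof_y ?hof_z !substZ.
- by rewrite -scalerAr.
- by rewrite -!scalerAr -scalerDr.
- by rewrite -!scalerAr !scalerDr scalerA mulrC -scalerA.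
Qed.

Lemma hof0 k : h_of (0 : {mpoly R[2]}) 0 0 k = 0.
Proof.
case: (I3_cases k) => ->; rewrite ?hof_x ?hof_y ?hof_z !subst0 ?mulr0 ?scaler0 ?addr0 //.
Qed.

Lemma hof_sum n (g : 'I_n -> R) (A B C : 'I_n -> {mpoly R[2]}) k :
  h_of (\sum_(i < n) g i *: A i) (\sum_(i < n) g i *: B i) (\sum_(i < n) g i *: C i) k =
  \sum_(i < n) g i *: h_of (A i) (B i) (C i) k.
Proof.
elim: n g A B C => [|n IH] g A B C; first by rewrite !big_ord0 hof0.
by rewrite !big_ord_recr /= hof_add IH hof_scale.
Qed.
End J.

Unset Implicit Arguments.

Theorem lemma8 (R : realFieldType) (d : nat) (hd : (1 <= d)%N) :
  (forall h : vfield R,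
     in_S d h <->
     exists psi1 psi2 psi3 : {mpoly R[2]},
       [/\ homog_z (d%:Z - 2) (subst_xb psi1),
           homog_z (d%:Z - 1) (subst_xb psi2),
           homog_z d%:Z (subst_xb psi3),
           psi_cond psi1 psi3
         & h = h_of psi1 psi2 psi3]) /\
  (exists b : 'I_d.+1 -> vfield R,
     [/\ forall i, in_S d (b i),
         forall c : 'I_d.+1 -> R,
           (forall k, \sum_(i < d.+1) c i *: b i k = 0) -> forall i, c i = 0
       & forall h, in_S d h ->
           exists c : 'I_d.+1 -> R, forall k, h k = \sum_(i < d.+1) c i *: b i k]).
Proof.
split.
  move=> h; split.
    move=> hS; case: (span_S hd hS) => c hc.
    exists (\sum_(i < d.+1) c i *: (bpsi R d i).1.1), (\sum_(i < d.+1) c i *: (bpsi R d i).1.2),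
      (\sum_(i < d.+1) c i *: (bpsi R d i).2).
    have ok : forall i : 'I_d.+1, _ := fun i => bpsi_ok R hd (leq_ord i).
    split.
    - by apply: hz_sum => i; case: (ok i).
    - by apply: hz_sum => i; case: (ok i).
    - by apply: hz_sum => i; case: (ok i).
    - by apply: cond_sum => i; case: (ok i).
    - by apply: functional_extensionality => k; rewrite hof_sum hc.
  by case=> [p1 [p2 [p3 [h1 h2 h3 h4 ->]]]]; exact: back.
exists (fun i : 'I_d.+1 => bh R d i); split.
- by move=> i; apply: bh_inS => //; exact: leq_ord.
- move=> c hc i.
  have := phi_sum d i c (fun i : 'I_d.+1 => bh R d i).
  rewrite (sum_delta hd) ?inord_val; last exact: leq_ord.
  have -> : (fun k => \sum_(i0 < d.+1) c i0 *: bh R d i0 k) = (fun _ => 0).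
    by apply: functional_extensionality => k; rewrite hc.
  have -> : phi d i (fun _ : 'I_3 => (0 : {mpoly R[3]})) = 0.
    by rewrite /phi; case: (nat_of_ord i) => [|j] /=; [exact: cf0 | case: ifP => _; exact: cf0].
  move/esym/eqP; rewrite mulf_eq0 (negbTE (w_neq0 _ _)) orbF => /eqP //.
- by move=> h hS; case: (span_S hd hS) => c hc; exists c => k; rewrite hc.
Qed.
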